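(* Let $P=\{S_1,\ldots,S_n\}$ be a homothetic square packing with contact graph $G=([n],E)$ whose radii $r_1,\ldots,r_n$ satisfy the weak generic condition. If either of the graphs $([n],E_x)$, $([n],E_y)$ contains a cycle $(n_1,\ldots,n_k)$ with $k\le n-2$, then $k=4$ and the squares $S_{n_1},S_{n_2},S_{n_3},S_{n_4}$ share a corner.
   Context: Let $S=\{(x,y): -1\le x,y\le 1\}$. A homothetic packing of $n$ squares is a set $P=\{S_1,\ldots,S_n\}$ with $S_i=r_iS+p_i$, $r_i>0$ (radii), $p_i=(x_i,y_i)\in\mathbb{R}^2$ (centres), such that distinct squares have disjoint interiors. Its contact graph is $G=([n],E)$ where $\{i,j\}\in E$ iff $i\ne j$ and $S_i\cap S_j\ne\emptyset$; $E_x$ is the set of pairs $\{i,j\}\in E$ with $r_i+r_j=|x_i-x_j|\ge|y_i-y_j|$ and $E_y$ the set with $r_i+r_j=|y_i-y_j|\ge|x_i-x_j|$. The radii satisfy the weak generic condition if the only function $\sigma:[n]\to\{-1,0,1\}$ with at least $4$ zeroes and $\sum_{i=1}^n\sigma_ir_i=0$ is the zero function. Four squares share a corner if they have a common point which is a corner of each of them. *)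

(* Defs.v *)
From HB Require Import structures.
From mathcomp Require Import all_boot all_order all_algebra.
From mathcomp Require Import reals.
Set Implicit Arguments. Unset Strict Implicit. Unset Printing Implicit Defensive.
Import Order.TTheory GRing.Theory Num.Theory.
Local Open Scope ring_scope.

(* The square r S + c, with S = [-1,1]^2: closed square, and its interior. *)
Definition in_square (R : realType) (r : R) (c q : R * R) : Prop :=
  `|q.1 - c.1| <= r /\ `|q.2 - c.2| <= r.
Definition in_interior (R : realType) (r : R) (c q : R * R) : Prop :=
  `|q.1 - c.1| < r /\ `|q.2 - c.2| < r.
Definition is_corner (R : realType) (r : R) (c q : R * R) : Prop :=
  (q.1 = c.1 + r \/ q.1 = c.1 - r) /\ (q.2 = c.2 + r \/ q.2 = c.2 - r).

Definition is_packing (R : realType) (n : nat) (r : 'I_n -> R) (p : 'I_n -> R * R) : Prop :=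
  (forall i, 0 < r i) /\
  (forall i j, i != j -> forall q,
      ~ (in_interior (r i) (p i) q /\ in_interior (r j) (p j) q)).

Definition contact (R : realType) (n : nat) (r : 'I_n -> R) (p : 'I_n -> R * R) (i j : 'I_n) : Prop :=
  i != j /\ exists q, in_square (r i) (p i) q /\ in_square (r j) (p j) q.

Definition Ex (R : realType) (n : nat) (r : 'I_n -> R) (p : 'I_n -> R * R) (i j : 'I_n) : Prop :=
  contact r p i j /\ r i + r j = `|(p i).1 - (p j).1| /\
  `|(p i).2 - (p j).2| <= `|(p i).1 - (p j).1|.
Definition Ey (R : realType) (n : nat) (r : 'I_n -> R) (p : 'I_n -> R * R) (i j : 'I_n) : Prop :=
  contact r p i j /\ r i + r j = `|(p i).2 - (p j).2| /\
  `|(p i).1 - (p j).1| <= `|(p i).2 - (p j).2|.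

Definition weak_generic (R : realType) (n : nat) (r : 'I_n -> R) : Prop :=
  forall sigma : 'I_n -> int,
    (forall i, sigma i \in [:: -1; 0; 1]) ->
    (4 <= #|[set i | sigma i == 0]|)%N ->
    \sum_(i < n) (sigma i)%:~R * r i = 0 ->
    forall i, sigma i = 0.

Definition is_cycle (n k : nat) (e : 'I_n -> 'I_n -> Prop) (c : 'I_k -> 'I_n) : Prop :=
  (3 <= k)%N /\ injective c /\ forall j : 'I_k, e (c j) (c (ordS j)).

(* Main.v *)
Require Import Defs.
From HB Require Import structures.
From mathcomp Require Import all_boot all_order all_algebra.
From mathcomp Require Import reals.
From mathcomp Require Import ring lra zify.
Set Implicit Arguments. Unset Strict Implicit. Unset Printing Implicit Defensive.
Import Order.TTheory GRing.Theory Num.Theory.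
Local Open Scope ring_scope.
Lemma valS k (j : 'I_k) : ((ordS j : nat) = j.+1 /\ (j.+1 < k)%N) \/ ((ordS j : nat) = 0%N /\ j.+1 = k).
Proof.
rewrite /=; have := ltn_ord j; rewrite leq_eqVlt => /orP [/eqP ->|h].
  by right; rewrite modnn.
by left; rewrite modn_small.
Qed.

Lemma iterS_val k (i : 'I_k) m : val (iter m (@ordS k) i) = ((i + m) %% k)%N.
Proof.
elim: m => [|m IH] /=; first by rewrite addn0 modn_small.
by rewrite IH addnS -addn1 modnDml addn1.
Qed.

Lemma cyc_const k T (f : 'I_k -> T) : (forall j, f (ordS j) = f j) -> forall i j, f i = f j.
Proof.
move=> H i j.
have Hit : forall m, f (iter m (@ordS k) j) = f j.
  by elim=> [|m IH] //=; rewrite H.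
have -> : i = iter ((i + k - j) %% k) (@ordS k) j.
  apply: val_inj; rewrite iterS_val modnDmr.
  have hj := ltn_ord j; have hi := ltn_ord i.
  have -> : (j + (i + k - j) = i + k)%N by lia.
  by rewrite modnDr modn_small.
by rewrite Hit.
Qed.

Lemma ovl1 (R : realType) (a1 b1 a2 b2 : R) : a1 < b1 -> a2 < b2 -> a1 < b2 -> a2 < b1 ->
  exists t, (a1 < t < b1) /\ (a2 < t < b2).
Proof.
move=> h1 h2 h3 h4.
case: (lerP a1 a2) => ha; case: (lerP b1 b2) => hb.
- exists ((a2 + b1) / 2); split; apply/andP; split; lra.
- exists ((a2 + b2) / 2); split; apply/andP; split; lra.
- exists ((a1 + b1) / 2); split; apply/andP; split; lra.
- exists ((a1 + b2) / 2); split; apply/andP; split; lra.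
Qed.

Lemma pack_sep (R : realType) n (r : 'I_n -> R) p i j : is_packing r p -> i != j ->
  r i + r j <= `|(p i).1 - (p j).1| \/ r i + r j <= `|(p i).2 - (p j).2|.
Proof.
move=> [rp H] ij.
case: (lerP (r i + r j) `|(p i).1 - (p j).1|) => h1; first by left.
case: (lerP (r i + r j) `|(p i).2 - (p j).2|) => h2; first by right.
exfalso.
have ri := rp i; have rj := rp j.
move: h1 h2; rewrite !ltr_norml => /andP [h1 h1'] /andP [h2 h2'].
have [t1 [/andP [t1a t1b] /andP [t1c t1d]]] :=
  @ovl1 R ((p i).1 - r i) ((p i).1 + r i) ((p j).1 - r j) ((p j).1 + r j)
  ltac:(lra) ltac:(lra) ltac:(lra) ltac:(lra).
have [t2 [/andP [t2a t2b] /andP [t2c t2d]]] :=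
  @ovl1 R ((p i).2 - r i) ((p i).2 + r i) ((p j).2 - r j) ((p j).2 + r j)
  ltac:(lra) ltac:(lra) ltac:(lra) ltac:(lra).
apply: (H i j ij (t1, t2)); rewrite /in_interior /= !ltr_norml.
split; split; apply/andP; split; lra.
Qed.

Lemma core (R : realType) (I : finType) (N Pv : I -> I) (b : I -> bool) (lo hi : I -> R) (a1 : I) :
  (forall j, N (Pv j) = j) -> (forall j, Pv (N j) = j) ->
  (forall j, N (N j) != j) -> (forall j, Pv (Pv j) != j) ->
  (forall j, b (N j) = ~~ b j) -> (forall j, b (Pv j) = ~~ b j) ->
  (forall j, lo j < hi j) ->
  (forall j j', j != j' -> b j = b j' -> hi j <= lo j' \/ hi j' <= lo j) ->
  (forall j, lo j <= hi (N j) /\ lo (N j) <= hi j) ->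
  (forall j, lo j <= hi (Pv j) /\ lo (Pv j) <= hi j) ->
  b a1 -> (forall j, b j -> lo a1 <= lo j) ->
  hi (N a1) <= lo (Pv a1) ->
  (exists j0 j1 j2 j3, [/\ N j0 = j1, N j1 = j2, N j2 = j3 & N j3 = j0] /\
     [/\ lo j0 = hi a1 \/ hi j0 = hi a1, lo j1 = hi a1 \/ hi j1 = hi a1,
         lo j2 = hi a1 \/ hi j2 = hi a1 & lo j3 = hi a1 \/ hi j3 = hi a1])
  \/ (exists j j', [/\ b j, ~~ b j', lo j = lo j' & hi j = hi j']).
Proof.
move=> NP PN NN PP bN bP lohi dis mN mP ba1 amin hcase.
have hA : forall a', b a' -> a' != a1 -> hi a1 <= lo a'.
  move=> a' ba' ne.
  have := dis a' a1 ne; rewrite ba' ba1 => /(_ erefl) [h|h] //.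
  have := amin a' ba'; have := lohi a'; lra.
set u := N a1; set w := Pv a1.
have bu : b u = false by rewrite /u bN ba1.
have bw : b w = false by rewrite /w bP ba1.
have Nw : N w = a1 by rewrite /w NP.
set a2 := N u.
have ba2 : b a2 by rewrite /a2 bN bu.
have a2ne : a2 != a1 by apply: NN.
have s_a2 := hA _ ba2 a2ne.
have [mu1 mu2] := mN a1; rewrite -/u in mu1 mu2.
have [mu3 mu4] := mN u; rewrite -/a2 in mu3 mu4.
have [mw1 mw2] := mN w; rewrite Nw in mw1 mw2.
have [mw3 mw4] := mP w.
have lou := lohi u; have low := lohi w; have la2 := lohi a2; have la1 := lohi a1.
have e1 : hi u = hi a1 by rewrite -/u -/w in hcase; lra.
have e2 : lo w = hi a1 by rewrite -/u -/w in hcase; lra.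
have e3 : lo a2 = hi a1 by lra.
case: (eqVneq (N a2) w) => Na2.
  left; exists a1, u, a2, w; split; first by [].
  by split; [right|right|left|left].
right.
set w' := N a2.
have bw' : b w' = false by rewrite /w' bN ba2.
have w'u : w' != u by apply: NN.
have [ma1 ma2] := mN a2; rewrite -/w' in ma1 ma2.
have lw' := lohi w'.
have h1 : hi a1 <= lo w'.
  have := dis w' u w'u; rewrite bw' bu => /(_ erefl) [h|h]; lra.
have h2 : hi w <= lo w'.
  have := dis w' w Na2; rewrite bw' bw => /(_ erefl) [h|h]; lra.
set as_ := Pv w.
have bas : b as_ by rewrite /as_ bP bw.
have asa1 : as_ != a1 by apply: PP.
have asa2 : as_ != a2.
  apply/eqP => e; move/eqP: Na2; apply; by rewrite -e /as_ NP.
have h3 := hA _ bas asa1.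
have las := lohi as_.
have h4 : hi a2 <= lo as_.
  have := dis as_ a2 asa2; rewrite bas ba2 => /(_ erefl) [h|h]; lra.
exists a2, w; split => //; first by rewrite bw.
  lra.
lra.
Qed.

Lemma S4 k (j : 'I_k) : (3 <= k)%N -> ordS (ordS (ordS (ordS j))) = j -> k = 4%N.
Proof.
move=> k3 /(congr1 (@nat_of_ord k)).
have := valS j; have := valS (ordS j); have := valS (ordS (ordS j)).
have := valS (ordS (ordS (ordS j))); have := ltn_ord j; lia.
Qed.

Lemma S3 k (j : 'I_k) : k = 3%N -> ordS (ordS (ordS j)) = j.
Proof.
move=> k3; apply: val_inj => /=; move: (valS j) (valS (ordS j)) (valS (ordS (ordS j))) (ltn_ord j).
rewrite /=; lia.
Qed.

Lemma all4k k (j0 j : 'I_k) : k = 4%N ->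
  j = j0 \/ j = ordS j0 \/ j = ordS (ordS j0) \/ j = ordS (ordS (ordS j0)).
Proof.
move=> k4.
have : (j : nat) = j0 \/ (j : nat) = ordS j0 \/ (j : nat) = ordS (ordS j0) \/ (j : nat) = ordS (ordS (ordS j0)).
  move: (valS j0) (valS (ordS j0)) (valS (ordS (ordS j0))) (ltn_ord j0) (ltn_ord j); lia.
by case=> [/val_inj|[/val_inj|[/val_inj|/val_inj]]]; auto.
Qed.

Lemma two_eq (R : realType) n (r : 'I_n -> R) (i i' : 'I_n) :
  weak_generic r -> (6 <= n)%N -> i != i' -> r i = r i' -> False.
Proof.
move=> wg n6 ne req.
pose sigma (i0 : 'I_n) : int := if i0 == i then 1 else if i0 == i' then -1 else 0.
have vals i0 : sigma i0 \in [:: -1; 0; 1].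
  by rewrite /sigma; case: (i0 == i); case: (i0 == i').
have zeros : (4 <= #|[set i0 | sigma i0 == 0]|)%N.
  have sub : ~: [set i; i'] \subset [set i0 | sigma i0 == 0].
    apply/subsetP => i0; rewrite !inE /sigma negb_or => /andP [/negbTE -> /negbTE ->].
    by [].
  have := subset_leq_card sub; have := cardsC [set i; i']; rewrite cards2 ne card_ord.
  set z := #|[set i0 | sigma i0 == 0]|; set z2 := #|~: [set i; i']|; lia.
have sum : \sum_(i0 < n) (sigma i0)%:~R * r i0 = 0.
  rewrite (bigD1 i) //= (bigD1 i') /=; last by rewrite eq_sym.
  rewrite big1; last first.
    by move=> i0 /andP [/negbTE h1 /negbTE h2]; rewrite /sigma h1 h2 mul0r.
  have ne' : i' != i by rewrite eq_sym.
  rewrite /sigma eqxx (negbTE ne') eqxx req /=.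
  rewrite ?intrN ?mulNr ?mul1r ?addr0; lra.
have := wg sigma vals zeros sum i; rewrite /sigma eqxx; discriminate.
Qed.
Definition sg (R : realType) (bb : bool) : R := if bb then 1 else -1.

Lemma alternation (R : realType) n (r : 'I_n -> R) p k (c : 'I_k -> 'I_n) :
  is_packing r p -> weak_generic r -> is_cycle (Ex r p) c -> (k <= n-2)%N ->
  forall j, ((p (c (ordS j))).1 < (p (c (ordS (ordS j)))).1) = ~~ ((p (c j)).1 < (p (c (ordS j))).1).
Proof.
move=> [rp _] wg [k3 [cinj ed]] kn.
pose N := @ordS k.
pose x j := (p (c j)).1.
pose rho j := r (c j).
pose b j := x j < x (N j).
have ex j : rho j + rho (N j) = `|x j - x (N j)| by case: (ed j) => _ [].
have dx j : x (N j) - x j = sg R (b j) * (rho j + rho (N j)).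
  by rewrite ex /b /sg; case: ltrP => h; lra.
have tel : \sum_j (x (N j) - x j) = 0.
  rewrite sumrB; apply/eqP; rewrite subr_eq0; apply/eqP.
  by rewrite [RHS](reindex_inj (@ordS_inj k)).
have hrel : \sum_j sg R (b j) * (rho j + rho (N j)) = 0.
  rewrite -[RHS]tel. apply: eq_bigr => j _. by rewrite dx.
have e1 : \sum_j sg R (b j) * rho j = \sum_j sg R (b (N j)) * rho (N j).
  by rewrite (reindex_inj (@ordS_inj k)).

have rel2 : \sum_j (sg R (b (N j)) + sg R (b j)) * rho (N j) = 0.
  transitivity (\sum_j sg R (b j) * (rho j + rho (N j))); last exact: hrel.
  under eq_bigr do rewrite mulrDl.
  rewrite big_split /= -e1 -big_split /=.
  by apply: eq_bigr => j _; rewrite mulrDr.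
pose tau j : int := if b (N j) == b j then (if b j then 1 else -1) else 0.
have tau2 j : sg R (b (N j)) + sg R (b j) = 2 * (tau j)%:~R.
  rewrite /tau /sg; case: (b (N j)); case: (b j) => /=; rewrite ?mulr0 ?mulr1 ?intrN ?mulrN1; lra.
have rel3 : \sum_j (tau j)%:~R * rho (N j) = 0.
  have : 2 * \sum_j (tau j)%:~R * rho (N j) = 0.
    rewrite mulr_sumr; transitivity (\sum_j (sg R (b (N j)) + sg R (b j)) * rho (N j)); last exact: rel2.
    apply: eq_bigr => j _; by rewrite tau2 mulrA.
  lra.

pose Zs := [set j | b (N j) != b j].
have rpos j : 0 < rho j by apply: rp.
have Zs_ne0 : #|Zs| != 0%N.
  apply/eqP => /cards0_eq Z0.
  have hb : forall j, b (N j) = b j.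
    move=> j; apply/eqP; apply: contraT => h.
    have : j \in Zs by rewrite inE h.
    by rewrite Z0 inE.
  have bc := cyc_const hb.
  pose j0 : 'I_k := Ordinal (leq_trans (isT : (0 < 3)%N) k3).
  have hs : \sum_j (rho j + rho (N j)) = 0.
    have : sg R (b j0) * \sum_j (rho j + rho (N j)) = 0.
      rewrite mulr_sumr -[RHS]hrel; apply: eq_bigr => j _.
      by rewrite (bc j j0).
    rewrite /sg; case: (b j0) => /=; lra.
  have hnn : forall j, xpredT j -> 0 <= rho j + rho (N j).
    move=> j _; have := rpos j; have := rpos (N j); lra.
  have := @psumr_eq0P _ _ xpredT (fun j => rho j + rho (N j)) hnn hs j0 isT.
  have := rpos j0; have := rpos (N j0).
  move=> h1 h2 /= h3; lra.
have sgsq bb : sg R bb * sg R bb = 1 by rewrite /sg; case: bb; lra.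
have Zs_ne1 : #|Zs| != 1%N.
  apply/cards1P => [[j1 Z1]].
  have e2 : \prod_j sg R (b (N j)) = \prod_j sg R (b j).
    by rewrite [RHS](reindex_inj (@ordS_inj k)).
  have hp : \prod_j (sg R (b (N j)) * sg R (b j)) = 1.
    rewrite big_split /= e2 -big_split /=.
    by apply: big1 => j _; rewrite sgsq.
  have hm : \prod_j (sg R (b (N j)) * sg R (b j)) = -1.
    rewrite (bigD1 j1) //= big1.
      have : j1 \in Zs by rewrite Z1 set11.
      rewrite inE /sg; case: (b (N j1)); case: (b j1) => //= _; lra.
    move=> j jne.
    have : j \notin Zs by rewrite Z1 inE.
    rewrite inE negbK => /eqP ->; exact: sgsq.
  move: hp; rewrite hm; lra.
have Zs2 : (2 <= #|Zs|)%N.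
  by move: Zs_ne0 Zs_ne1; case: #|Zs| => [|[|m]].
pose h := fun j => c (N j).
have hinj : injective h by move=> a a' /cinj /ordS_inj.
pose sigma (i : 'I_n) : int := if [pick j | h j == i] is Some j then tau j else 0.
have sig_h j : sigma (h j) = tau j.
  rewrite /sigma; case: pickP => [j' /eqP /hinj -> //|/(_ j)]; by rewrite eqxx.
have tau0 j : j \in Zs -> tau j = 0 by rewrite inE /tau => /negbTE ->.
have sig_vals i : sigma i \in [:: -1; 0; 1].
  rewrite /sigma; case: pickP => [j _|_] //; rewrite /tau.
  by case: (b (N j) == b j); case: (b j).
have sig_sum : \sum_(i < n) (sigma i)%:~R * r i = 0.
  rewrite (bigID (fun i => i \in h @: setT)) /=.
  rewrite [X in _ + X]big1 ?addr0.
    rewrite big_imset /=; last by move=> a a' _ _ /hinj.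
    rewrite (eq_bigl xpredT); last by move=> j; rewrite in_setT.
    rewrite -[RHS]rel3; apply: eq_bigr => j _.
    by rewrite sig_h.
  move=> i hi; rewrite /sigma; case: pickP => [j /eqP hj|]; last by rewrite mul0r.
  by move: hi; rewrite -hj imset_f.
have sig_zeros : (4 <= #|[set i | sigma i == 0]|)%N.
  have sub : ~: (h @: ~: Zs) \subset [set i | sigma i == 0].
    apply/subsetP => i; rewrite !inE /sigma; case: pickP => [j /eqP hj|//].
    move=> hi; rewrite tau0 //.
    move: hi; rewrite -hj; apply: contraR => hjZ.
    by rewrite imset_f // inE.
  have := subset_leq_card sub.
  have := cardsC (h @: ~: Zs); have := cardsC Zs.
  rewrite card_imset // !card_ord.
  move: Zs2 kn; set z1 := #|Zs|; set z2 := #|~: Zs|; set z3 := #|~: (h @: ~: Zs)|; set z4 := #|[set i | sigma i == 0]|. lia.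
have all0 := wg sigma sig_vals sig_zeros sig_sum.
move=> j.
move: (all0 (h j)); rewrite sig_h /tau.
by rewrite /b /x /N; case: ((p (c (ordS j))).1 < (p (c (ordS (ordS j)))).1); case: ((p (c j)).1 < (p (c (ordS j))).1).
Qed.

Lemma main_x (R : realType) n (r : 'I_n -> R) p k (c : 'I_k -> 'I_n) :
  is_packing r p -> weak_generic r -> is_cycle (Ex r p) c -> (k <= n-2)%N ->
  k = 4%N /\ exists q : R * R, forall j : 'I_k, is_corner (r (c j)) (p (c j)) q.
Proof.
move=> pk wg cy kn.
have alt := alternation pk wg cy kn.
case: cy => k3 [cinj ed]; have rp := pk.1.
pose x j := (p (c j)).1.
pose y j := (p (c j)).2.
pose rho j := r (c j).
pose b j := x j < x (ordS j).
have rpos j : 0 < rho j by apply: rp.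
have altb j : b (ordS j) = ~~ b j := alt j.
have NP (j : 'I_k) : ordS (ord_pred j) = j := ord_predK j.
have PN (j : 'I_k) : ord_pred (ordS j) = j := ordSK j.
have altP j : b (ord_pred j) = ~~ b j.
  by have := altb (ord_pred j); rewrite NP => ->; rewrite negbK.
have ex j : rho j + rho (ordS j) = `|x j - x (ordS j)| /\ `|y j - y (ordS j)| <= `|x j - x (ordS j)|.
  by case: (ed j) => _ [].
have dx j : x (ordS j) - x j = sg R (b j) * (rho j + rho (ordS j)).
  by rewrite (ex j).1 /b /sg; case: ltrP => h; lra.
pose g j := x j + sg R (b j) * rho j.
have gN j : g (ordS j) = g j.
  rewrite /g; have := dx j; rewrite altb /sg; case: (b j) => /=; lra.
pose j0 : 'I_k := Ordinal (leq_trans (isT : (0 < 3)%N) k3).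
pose L := g j0.
have hL j : g j = L := cyc_const gN j j0.
have k4 : (4 <= k)%N.
  case: (ltnP 3 k) => // k3'.
  have e3 : k = 3%N by lia.
  have e := S3 j0 e3.
  have := altb (ordS (ordS j0)); rewrite e (altb (ordS j0)) (altb j0).
  by case: (b j0).
have NN (j : 'I_k) : ordS (ordS j) != j.
  apply/negP => /eqP e; move: (f_equal (@nat_of_ord k) e).
  move: (valS j) (valS (ordS j)) (ltn_ord j); lia.
have PP (j : 'I_k) : ord_pred (ord_pred j) != j.
  apply/eqP => e; move: (NN (ord_pred (ord_pred j))); by rewrite !NP e eqxx.
pose lo j := y j - rho j.
pose hi j := y j + rho j.
have lohi j : lo j < hi j by rewrite /lo /hi; have := rpos j; lra.
have dis j j' : j != j' -> b j = b j' -> hi j <= lo j' \/ hi j' <= lo j.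
  move=> ne be; have cne : c j != c j' by rewrite (inj_eq cinj).
  have rj := rpos j; have rj' := rpos j'.
  case: (pack_sep pk cne) => h.
    have {}h : rho j + rho j' <= `|x j - x j'| := h.
    exfalso; rewrite ler_normr in h.
    have := hL j; have := hL j'; rewrite /g be; case: (b j') => /=; rewrite /sg.
      by move=> *; case/orP: h; lra.
    by move=> *; case/orP: h; lra.
  have {}h : rho j + rho j' <= `|y j - y j'| := h.
  move: h; rewrite ler_normr /lo /hi => /orP [h|h] *; lra.
have mN j : lo j <= hi (ordS j) /\ lo (ordS j) <= hi j.
  have [e1 e2] := ex j; move: e2; rewrite -e1 ler_norml /lo /hi => /andP [h1 h2].
  split; lra.
have mP j : lo j <= hi (ord_pred j) /\ lo (ord_pred j) <= hi j.
  have := mN (ord_pred j); rewrite NP; case=> h1 h2; split => //.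
have [ja bja] : exists ja, b ja.
  by case E: (b j0); [exists j0 | exists (ordS j0); rewrite altb E].
case: (arg_minP lo bja) => a1 ba1 amin.
have ne1 : ordS a1 != ord_pred a1.
  apply/negP => /eqP e; move: (NN a1); by rewrite e NP eqxx.
have bb : b (ordS a1) = b (ord_pred a1) by rewrite altb altP.
have res : (exists j0 j1 j2 j3, [/\ ordS j0 = j1, ordS j1 = j2, ordS j2 = j3 & ordS j3 = j0] /\
     [/\ lo j0 = hi a1 \/ hi j0 = hi a1, lo j1 = hi a1 \/ hi j1 = hi a1,
         lo j2 = hi a1 \/ hi j2 = hi a1 & lo j3 = hi a1 \/ hi j3 = hi a1])
  \/ (exists j j', [/\ b j, ~~ b j', lo j = lo j' & hi j = hi j']).
  case: (dis _ _ ne1 bb) => h.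
    exact: (core NP PN NN PP altb altP lohi dis mN mP ba1 amin h).
  case: (core PN NP PP NN altP altb lohi dis mP mN ba1 amin h) => [[j0' [j1 [j2 [j3 [[e1 e2 e3 e4] [c0 c1 c2 c3]]]]]]|bad]; last by right.
  left; exists j0', j3, j2, j1; split; last by split.
  split.
  - by rewrite -e4 NP.
  - by rewrite -e3 NP.
  - by rewrite -e2 NP.
  - by rewrite -e1 NP.
case: res => [[j0' [j1 [j2 [j3 [[e1 e2 e3 e4] [c0 c1 c2 c3]]]]]]|[j [j' [bj bj' el eh]]]].
  have hk : k = 4%N by apply: (S4 (j := j0')); rewrite // e1 e2 e3 e4.
  split => //; exists (L, hi a1) => j.
  have corner : forall j, lo j = hi a1 \/ hi j = hi a1 -> is_corner (r (c j)) (p (c j)) (L, hi a1).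
    move=> j' hj; rewrite /is_corner /=; split.
      have := hL j'; rewrite /g /sg /x /rho; case: (b j') => /= h; [left|right]; lra.
    by case: hj; rewrite /lo /hi /y /rho => h; [right|left]; lra.
  by case: (all4k j0' j hk) => [->|[->|[->|->]]]; apply: corner; rewrite ?e1 ?e2 ?e3.
exfalso.
have ne : c j != c j'.
  rewrite (inj_eq cinj); apply/negP => /eqP e; move: bj'; by rewrite -e bj.
have : rho j = rho j' by move: el eh; rewrite /lo /hi; lra.
apply: (two_eq wg _ ne); lia.
Qed.

Theorem lemma17 (R : realType) (n : nat) (r : 'I_n -> R) (p : 'I_n -> R * R)
  (k : nat) (c : 'I_k -> 'I_n) :
  is_packing r p -> weak_generic r ->
  (is_cycle (Ex r p) c \/ is_cycle (Ey r p) c) ->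
  (k <= n - 2)%N ->
  k = 4%N /\ exists q : R * R, forall j : 'I_k, is_corner (r (c j)) (p (c j)) q.
Proof.
move=> pk wg [hx|hy] kn; first exact: main_x pk wg hx kn.
pose p' i := ((p i).2, (p i).1).
have pk' : is_packing r p'.
  case: pk => rp H; split => // i j ij q [[h1 h2] [h3 h4]].
  by apply: (H i j ij (q.2, q.1)); split; split.
have hx' : is_cycle (Ex r p') c.
  case: hy => k3 [ci ed]; split => //; split => // j.
  case: (ed j) => [[ij [q [[qa qb] [qc qd]]]] [e1 e2]].
  split; last by split.
  split => //; exists (q.2, q.1); split; split => //.
case: (main_x pk' wg hx' kn) => k4 [q hq]; split => //.
exists (q.2, q.1) => j; case: (hq j) => a b; by split.
Qed.
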